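(* Let $r$ be an odd positive integer and $n=2^{\alpha}p_1^{\alpha_1}p_2^{\alpha_2}\cdots p_s^{\alpha_s}$, where $p_1,\ldots,p_s$ are distinct odd primes each greater than $r$, $\alpha,\alpha_1,\ldots,\alpha_s$ are positive integers, and $2^t p_1^{\gamma}+r$ is composite for all $t\in\{1,\ldots,\alpha\}$ and $\gamma\in\{1,\ldots,\alpha_1\}$. For each such $t,\gamma$ let $q_{t,\gamma}$ be a prime divisor of $2^tp_1^{\gamma}+r$, and let $M$ be the least common multiple of all the $q_{t,\gamma}$. If $p_i\equiv 1\pmod{M}$ for all $i\in\{2,\ldots,s\}$ and $p_1-r\nmid n$, then $n\in G_r$.
   Context: For a positive integer $r$, the $r$-th Schemmel totient function $S_r:\mathbb{N}\to\mathbb{N}_0$ is the multiplicative arithmetic function (so $S_r(1)=1$ and $S_r(ab)=S_r(a)S_r(b)$ for coprime $a,b$) defined on prime powers by $S_r(p^{\alpha})=0$ if $p\le r$ and $S_r(p^\alpha)=p^{\alpha-1}(p-r)$ if $p>r$, for all primes $p$ and positive integers $\alpha$. $G_r$ denotes the set of positive integers not in the range of $S_r$. *)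

(* Defs.v *)
From mathcomp Require Import all_boot.
Set Implicit Arguments. Unset Strict Implicit. Unset Printing Implicit Defensive.

(* Schemmel totient S_r, written out as the multiplicative function over the
   prime factorization: S_r(n) = prod_{p^a || n} (p <= r ? 0 : p^(a-1)(p-r)).
   For n = 1 the product is empty, so S_r(1) = 1. Only n >= 1 is meaningful. *)
Definition schemmel (r n : nat) : nat :=
  \prod_(f <- prime_decomp n)
     (if f.1 <= r then 0 else f.1 ^ f.2.-1 * (f.1 - r)).

Definition in_G (r n : nat) : Prop :=
  0 < n /\ ~ (exists m, 0 < m /\ schemmel r m = n).

Definition composite (x : nat) : bool := (1 < x) && ~~ prime x.

(* Main.v *)
Require Import Defs.
From mathcomp Require Import all_boot.
From mathcomp Require Import zify.

Lemma prime_dvd_ordprod (l s : nat) (F : nat -> nat) :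
  prime l -> l %| \prod_(i < s) F i -> exists i : 'I_s, l %| F i.
Proof.
move=> pl; rewrite Euclid_dvd_prod // big_has_cond => /hasP [i _ /andP [_ Hi]].
by exists i.
Qed.

Lemma modone (Q P : nat) : 0 < P ->
  (forall l, prime l -> l %| P -> l = 1 %[mod Q]) -> P = 1 %[mod Q].
Proof.
elim: P {-2}P (leqnn P) => [|N IH] P HP P0 Hl; first by lia.
have [P1|P1] := leqP P 1; first by have -> : P = 1 by lia.
have pd := pdiv_prime P1.
have dv := pdiv_dvd P.
rewrite -(divnK dv) -modnMmr (Hl _ pd dv) modnMmr muln1.
apply: IH.
- have := ltn_Pdiv (prime_gt1 pd) P0; lia.
- by rewrite divn_gt0 ?prime_gt0 // dvdn_leq.
- move=> l pl hl; apply: Hl => //; apply: dvdn_trans hl _; exact: dvdn_div.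
Qed.

Lemma odd_prod (s : nat) (F : nat -> nat) :
  (forall i, i < s -> odd (F i)) -> odd (\prod_(i < s) F i).
Proof.
move=> H; apply: (big_ind (fun x => odd x)) => //.
  by move=> x y; rewrite oddM => -> ->.
by move=> i _; apply: H.
Qed.

Lemma dvd_biglcm_nat (a b i : nat) (F : nat -> nat) : a <= i < b ->
  F i %| \big[lcmn/1]_(a <= j < b) F j.
Proof.
move=> Hi; rewrite (big_rem i) ?mem_index_iota //=; exact: dvdn_lcml.
Qed.

Theorem theorem3p2 (r alpha s : nat) (p a : nat -> nat) (n : nat)
  (q : nat -> nat -> nat) :
  odd r -> 0 < r ->
  0 < s ->
  0 < alpha ->
  (forall i, i < s -> [/\ prime (p i), odd (p i), r < p i & 0 < a i]) ->
  (forall i j, i < s -> j < s -> p i = p j -> i = j) ->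
  n = 2 ^ alpha * \prod_(i < s) p i ^ a i ->
  (forall t g, 1 <= t <= alpha -> 1 <= g <= a 0 ->
     composite (2 ^ t * p 0 ^ g + r)) ->
  (forall t g, 1 <= t <= alpha -> 1 <= g <= a 0 ->
     prime (q t g) /\ q t g %| 2 ^ t * p 0 ^ g + r) ->
  (let M := \big[lcmn/1]_(1 <= t < alpha.+1) \big[lcmn/1]_(1 <= g < (a 0).+1) q t g in
   forall i, 1 <= i < s -> p i = 1 %[mod M]) ->
  ~~ (p 0 - r %| n) ->
  in_G r n.
Proof.
move=> oddr r0 s0 al0 Hp Hinj En Hcomp Hq HM Hnd.
have [pp0 op0 rp0 a00] := Hp 0 s0.
set X := \prod_(i < s) p i ^ a i in En.
have oX : odd X.
  rewrite /X; apply: (@odd_prod s (fun i => p i ^ a i)) => i /Hp [_ oi _ _].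
  by rewrite oddX oi orbT.
have X0 : 0 < X by move: oX; case: (X).
have n0 : 0 < n by rewrite En muln_gt0 expn_gt0 X0.
split => // -[m [m0 Hm]].
have Hdiv : p 0 %| n.
  rewrite En /X (bigD1 (Ordinal s0)) //=; apply: dvdn_mull; apply: dvdn_mulr.
  exact: dvdn_exp.
move: (Hdiv); rewrite -Hm /schemmel Euclid_dvd_prod // big_has => /hasP [[qq b] Hf Hpf].
have Htn : (if qq <= r then 0 else qq ^ b.-1 * (qq - r)) %| n.
  by rewrite -Hm /schemmel (big_rem (qq, b)) //=; apply: dvdn_mulr.
have [pq b0 _] := mem_prime_decomp Hf.
move: Hpf Htn => /=; case: leqP => qr.
  by rewrite dvd0n => _ /eqP n00; rewrite n00 in n0.
rewrite Euclid_dvdM // => /orP [H1|Hd] Htn.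
  move: H1; rewrite Euclid_dvdX // dvdn_prime2 // => /andP [/eqP E _].
  by case/negP: Hnd; rewrite E; apply: dvdn_trans Htn; apply: dvdn_mull.
set d := qq - r in Hd Htn.
have dn : d %| n by apply: dvdn_trans Htn; apply: dvdn_mull.
have d0 : 0 < d by rewrite /d subn_gt0.
have oq : odd qq.
  case: (even_prime pq) => // q2.
  have d1 : d = 1 by rewrite /d q2; move: qr r0; rewrite q2; clear; lia.
  by move: Hd; rewrite d1 dvdn1 => /eqP p1; rewrite p1 in pp0.
have ed : ~~ odd d by rewrite /d oddB ?oq ?oddr //; exact: ltnW.
have [d1 cd1 Ed] := pfactor_coprime (isT : prime 2) d0.
set t := logn 2 d in Ed.
have d10 : 0 < d1 by move: d0; rewrite Ed muln_gt0 => /andP [].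
have [P cP Ed1] := pfactor_coprime pp0 d10.
set g := logn (p 0) d1 in Ed1.
have P0 : 0 < P by move: d10; rewrite Ed1 muln_gt0 => /andP [].
have od1 : odd d1 by rewrite -coprime2n.
have cp2 : coprime (p 0) 2 by rewrite prime_coprime // dvdn_prime2 //; apply/eqP => E; rewrite E in op0.
have t1 : 1 <= t.
  case: (posnP t) => // t0; move: ed; rewrite Ed t0 expn0 muln1 od1 //.
have tal : t <= alpha.
  rewrite -(dvdn_Pexp2l _ _ (isT : 1 < 2)).
  have : 2 ^ t %| 2 ^ alpha * X by rewrite -En; apply: dvdn_trans dn; rewrite Ed dvdn_mull.
  by rewrite Gauss_dvdl // coprimeXl // coprime2n.
have g1 : 1 <= g.
  case: (posnP g) => // g0; move: Hd; rewrite Ed Ed1 g0 expn0 muln1 Euclid_dvdM //.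
  case/orP; first by move=> H; move: cP; rewrite prime_coprime // H.
  rewrite Euclid_dvdX // dvdn_prime2 //.
  by case/andP => /eqP E; rewrite E in op0.
have ga : g <= a 0.
  rewrite -(dvdn_Pexp2l _ _ (prime_gt1 pp0)).
  have : p 0 ^ g %| n by apply: dvdn_trans dn; rewrite Ed Ed1 dvdn_mulr // dvdn_mull.
  rewrite En Gauss_dvdr; last by rewrite coprime_sym coprimeXl // coprime_sym coprimeXl.
  rewrite /X (bigD1 (Ordinal s0)) //= Gauss_dvdl //.
  apply: coprimeXl; apply: (big_ind (fun x => coprime (p 0) x)); first exact: coprimen1.
    by move=> x y Hx Hy; rewrite coprimeMr Hx Hy.
  move=> i Hi.
  rewrite coprime_sym; apply: coprimeXl.
  have [pi _ _ _] := Hp i (ltn_ord i).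
  rewrite prime_coprime // dvdn_prime2 //; apply/eqP => E.
  move: Hi; have := Hinj i 0 (ltn_ord i) s0 E => E2.
  by apply/negP; rewrite negbK; apply/eqP; apply: val_inj.
have Ht : 1 <= t <= alpha by rewrite t1 tal.
have Hg : 1 <= g <= a 0 by rewrite g1 ga.
have [pQ dQ] := Hq t g Ht Hg.
set Q := q t g in pQ dQ.
have QM : Q %| \big[lcmn/1]_(1 <= t < alpha.+1) \big[lcmn/1]_(1 <= g < (a 0).+1) q t g.
  apply: (dvdn_trans _ (@dvd_biglcm_nat 1 alpha.+1 t (fun t => \big[lcmn/1]_(1 <= g < (a 0).+1) q t g) _)); last by rewrite t1 ltnS tal.
  by apply: (@dvd_biglcm_nat 1 (a 0).+1 g (fun g => q t g)); rewrite g1 ltnS ga.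

have PQ : P = 1 %[mod Q].
  apply: modone => // l pl lP.
  have ln : l %| 2 ^ alpha * X.
    rewrite -En; apply: dvdn_trans dn; apply: dvdn_trans lP _.
    by rewrite Ed Ed1 -mulnA dvdn_mulr.
  move: ln; rewrite Euclid_dvdM // => /orP [|].
    rewrite Euclid_dvdX // dvdn_prime2 // => /andP [/eqP l2 _].
    have : odd P by apply: (dvdn_odd _ od1); rewrite Ed1 dvdn_mulr.
    by move: lP; rewrite l2 => /dvdn_odd; rewrite /= => H /H.
  move/(@prime_dvd_ordprod l s (fun i => p i ^ a i) pl) => [i].
  have [pi _ _ _] := Hp i (ltn_ord i).
  rewrite Euclid_dvdX // dvdn_prime2 // => /andP [/eqP li _].
  case: (posnP i) => i0.
    by move: cP; rewrite i0 in li; rewrite prime_coprime // -li lP.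
  rewrite li; have := HM i; rewrite /= => H.
  by rewrite -(modn_dvdm _ QM) H ?ltn_ord ?i0 // modn_dvdm.
have Qq : Q %| qq.
  have -> : qq = (P - 1) * (2 ^ t * p 0 ^ g) + (2 ^ t * p 0 ^ g + r).
    have : qq = d + r by rewrite /d subnK // ltnW.
    rewrite Ed Ed1 => ->; rewrite mulnBl mul1n.
    have : 2 ^ t * p 0 ^ g <= P * (2 ^ t * p 0 ^ g) by rewrite leq_pmull.
    rewrite -!mulnA (mulnC _ (2 ^ t)); move=> HH; move: HH; clear; lia.
  rewrite dvdn_add // dvdn_mulr //.
  by rewrite -eqn_mod_dvd // PQ.
have EQ : Q = qq by apply/eqP; rewrite -dvdn_prime2.
have Hc := Hcomp t g Ht Hg.
move/andP: Hc => [x1 xnp].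
have Qx : Q < 2 ^ t * p 0 ^ g + r.
  have x0 : 0 < 2 ^ t * p 0 ^ g + r by rewrite addn_gt0 r0 orbT.
  rewrite ltn_neqAle (dvdn_leq x0 dQ) andbT.
  by apply/eqP => E; rewrite -E pQ in xnp.
have : 2 ^ t * p 0 ^ g + r <= qq.
  have : qq = d + r by rewrite /d subnK // ltnW.
  rewrite Ed Ed1 => ->; rewrite leq_add2r -mulnA mulnC leq_pmull //.
by rewrite -EQ leqNgt Qx.
Qed.
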